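(* Let $\mathbb{F}$ be an algebraically closed field of characteristic zero, $n\geq1$, and $A\in{\rm GL}_n(\mathbb{F})$. Then there exists an invertible diagonal matrix $D\in{\rm D}_n(\mathbb{F})$ such that $AD$ has $n$ pairwise distinct eigenvalues.
   Context: ${\rm D}_n(\mathbb{F})$ denotes the group of invertible diagonal $n\times n$ matrices over $\mathbb{F}$. *)

(* Defs.v *)
From HB Require Import structures.
From mathcomp Require Import all_boot all_order all_algebra.
Set Implicit Arguments. Unset Strict Implicit. Unset Printing Implicit Defensive.

(* Main.v *)
Require Import Defs.
From HB Require Import structures.
From mathcomp Require Import all_boot all_order all_algebra.
From mathcomp Require Import ring zify.
From Stdlib Require Import Classical ClassicalEpsilon.
Import GRing.Theory.
Local Open Scope ring_scope.

Section Aux.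
Variable F : fieldType.
Hypothesis ch : [pchar F] =i pred0.

Definition DR (p : {poly F}) (r : F) := (p.[r] == 0) && (p^`().[r] == 0).
Definition upd (y : nat -> F) (i : nat) (t : F) := fun j : nat => if j == i then t else y j.

Lemma natr_neq0 n : (n.+1%:R : F) != 0.
Proof. by have /pcharf0P -> := ch. Qed.

Lemma natr_inj_ch : injective (fun n : nat => (n%:R : F)).
Proof.
have h m n : (m <= n)%N -> (m%:R : F) = n%:R -> m = n.
  move=> le e; apply/eqP; rewrite eqn_leq le /=.
  have : ((n - m)%:R : F) == 0 by rewrite natrB // e subrr.
  by have /pcharf0P -> := ch; rewrite subn_eq0.
move=> m n /= e; case: (leqP m n) => [le|/ltnW le]; first exact: h.
by apply/esym/h.
Qed.

Lemma DR_affine (a b : {poly F}) t r :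
  DR (a + t *: b) r = ((a.[r] + t * b.[r] == 0) && (a^`().[r] + t * b^`().[r] == 0)).
Proof. by rewrite /DR derivD derivZ !hornerE. Qed.

Lemma DR_two (a b : {poly F}) t1 t2 r : t1 != t2 ->
  DR (a + t1 *: b) r -> DR (a + t2 *: b) r -> forall t, DR (a + t *: b) r.
Proof.
move=> ne; rewrite !DR_affine => /andP[/eqP h1 /eqP h2] /andP[/eqP h3 /eqP h4] t.
have hb : b.[r] = 0.
  have : (t1 - t2) * b.[r] = (a.[r] + t1 * b.[r]) - (a.[r] + t2 * b.[r]) by ring.
  rewrite h1 h3 subrr => /eqP; rewrite mulf_eq0 subr_eq0 (negbTE ne) /= => /eqP //.
have hb' : b^`().[r] = 0.
  have : (t1 - t2) * b^`().[r] = (a^`().[r] + t1 * b^`().[r]) - (a^`().[r] + t2 * b^`().[r]) by ring.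
  rewrite h2 h4 subrr => /eqP; rewrite mulf_eq0 subr_eq0 (negbTE ne) /= => /eqP //.
move: h1 h2; rewrite DR_affine hb hb' !mulr0 !addr0 => -> ->.
by rewrite eqxx.
Qed.

Lemma DR_W (a b : {poly F}) t r : DR (a + t *: b) r -> (a * b^`() - a^`() * b).[r] = 0.
Proof.
rewrite DR_affine => /andP[/eqP h1 /eqP h2].
have e1 : a.[r] = - (t * b.[r]) by apply/eqP; rewrite -addr_eq0 h1.
have e2 : a^`().[r] = - (t * b^`().[r]) by apply/eqP; rewrite -addr_eq0 h2.
rewrite hornerD hornerN !hornerM e1 e2; ring.
Qed.

Lemma coefM_top (p q : {poly F}) s t : (size p <= s.+1)%N -> (size q <= t.+1)%N ->
  (p * q)`_(s + t) = p`_s * q`_t.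
Proof.
move=> hp hq; rewrite coefM.
have hs : (s < (s + t).+1)%N by rewrite ltnS leq_addr.
rewrite (bigD1 (Ordinal hs)) //= addKn big1 ?addr0 // => j /= hj.
have : nat_of_ord j != s by apply: contra hj => /eqP e; apply/eqP/val_inj.
rewrite neq_ltn => /orP[lt|gt].
  rewrite [q`__]nth_default ?mulr0 //; apply: leq_trans hq _.
  lia.
by rewrite [p`__]nth_default ?mul0r //; apply: leq_trans hp _.
Qed.

Lemma W_neq0 (u v : {poly F}) d : (0 < d)%N -> size u = d.+1 -> u`_d = 1 ->
  (size v <= d)%N -> v != 0 -> u * v^`() - u^`() * v != 0.
Proof.
move=> d0 su ud sv vn0.
have su' : (size u^`() <= d)%N.
  have := @lt_size_deriv _ u; rewrite su; apply.
  by rewrite -size_poly_eq0 su.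
case hm : (size v) => [|m]; first by move: vn0; rewrite -size_poly_eq0 hm.
have vm : v`_m != 0.
  by have := vn0; rewrite -lead_coef_eq0 lead_coefE hm.
case: m hm vm => [|m] hm vm.
  have /size_poly1P [c cn0 ->] : size v == 1%N by rewrite hm.
  rewrite derivC mulr0 sub0r oppr_eq0 mulf_neq0 ?polyC_eq0 //.
  apply/eqP => /(congr1 (fun p : {poly F} => p`_(d.-1))).
  rewrite coef_deriv prednK // ud coef0 => /eqP.
  by rewrite -(prednK d0) (negbTE (natr_neq0 _)).
apply/eqP => /(congr1 (fun p : {poly F} => p`_(d + m))) /eqP.
rewrite coef0 coefB coefM_top ?su //; last first.
  by have := lt_size_deriv vn0; rewrite hm.
have -> : (d + m = d.-1 + m.+1)%N by rewrite addnS -addSn prednK.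
rewrite coefM_top ?hm ?prednK //.
rewrite !coef_deriv prednK // ud mul1r.
have -> : v`_m.+1 *+ m.+1 - 1 *+ d * v`_m.+1 = v`_m.+1 * (m.+1%:R - d%:R).
  by rewrite mulrBr mulr_natr mulrC.
rewrite mulf_eq0 (negbTE vm) /= subr_eq0.
move=> /eqP /natr_inj_ch e.
by move: sv; rewrite hm e ltnn.
Qed.



Lemma not_ex_DR (T : Type) (b : T -> bool) : ~ (exists y, ~~ b y) -> forall y, b y.
Proof. by move=> h y; apply/negPn/negP => hy; apply: h; exists y. Qed.

Lemma key d (d_gt0 : (0 < d)%N) : forall k (P : (nat -> F) -> {poly F}),
  (forall y, size (P y) = d.+1 /\ (P y)`_d = 1) ->
  (forall y z, (forall i, (i < k)%N -> y i = z i) -> P y = P z) ->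
  (forall y i t, (i < k)%N ->
     P (upd y i t) = P (upd y i 0) + t *: (P (upd y i 1) - P (upd y i 0))) ->
  (forall r, exists y, ~~ DR (P y) r) ->
  exists y, (forall i, (i < k)%N -> y i != 0) /\ forall r, ~~ DR (P y) r.
Proof.
elim=> [|k IH] P Hsz Hdep Haff Hnd.
  exists (fun _ => 0); split => // r; have [y Hy] := Hnd r.
  by rewrite (Hdep (fun _ => 0) y).
pose g y := P (upd y k 1) - P (upd y k 0).
have HP t y : P (upd y k t) = P (upd y k 0) + t *: g y by apply: Haff.
have Hy y : P y = P (upd y k (y k)).
  by apply: Hdep => i _; rewrite /upd; case: eqP => // ->.
suff [t0 [t0nz Hg]] : exists t0, t0 != 0 /\ forall r, exists y, ~~ DR (P (upd y k t0)) r.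
  pose P' y := P (upd y k t0).
  have [||||y [Hy1 Hy2]] := IH P'.
  - by move=> y; apply: Hsz.
  - move=> y z Hyz; apply: Hdep => i; rewrite ltnS leq_eqVlt /upd.
    by case: eqP => //= _; apply: Hyz.
  - move=> y i t hi; rewrite /P'.
    have comm s : P (upd (upd y i s) k t0) = P (upd (upd y k t0) i s).
      apply: Hdep => j _; rewrite /upd; case: (eqVneq j i) => [->|//].
      by rewrite (ltn_eqF hi).
    by rewrite !comm Haff // ltnS ltnW.
  - exact: Hg.
  exists (upd y k t0); split => // i; rewrite ltnS leq_eqVlt /upd.
  by case: eqP => //= _; apply: Hy1.
case: (classic (exists y0, g y0 != 0)) => [[y0 gy0]|Hg0]; last first.
  have Hg0' := @not_ex_DR _ (fun y0 => g y0 == 0) Hg0.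
  exists 1; split; first exact: oner_neq0.
  move=> r; have [y ny] := Hnd r; exists y.
  by rewrite HP (eqP (Hg0' y)) scaler0 -(scaler0 _ (y k)) -(eqP (Hg0' y)) -HP -Hy.
set u := P (upd y0 k 0); set v := g y0.
set W := u * v^`() - u^`() * v.
have [su ud] := Hsz (upd y0 k 0).
have Wn0 : W != 0.
  apply: (@W_neq0 u v d d_gt0 su ud) => //.
  apply/leq_sizeP => j hj; have [su1 ud1] := Hsz (upd y0 k 1).
  rewrite /v /g coefB; move: hj; rewrite leq_eqVlt => /orP[/eqP <-|hj].
    by rewrite ud1 -/u ud subrr.
  by rewrite !nth_default ?subrr ?su ?su1.
set N := size W.
apply: NNPP => Hno.
have Hex i : exists r, (i < N)%N -> forall y, DR (P (upd y k i.+1%:R)) r.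
  case: (ltnP i N) => hi; last by exists 0.
  apply: NNPP => Hne; apply: Hno; exists i.+1%:R; split; first exact: natr_neq0.
  move=> r; apply: NNPP => Hr; apply: Hne; exists r => _.
  by apply: not_ex_DR => -[y hy]; apply: Hr; exists y.
pose f i := proj1_sig (constructive_indefinite_description _ (Hex i)).
have Hf i : (i < N)%N -> forall y, DR (P (upd y k i.+1%:R)) (f i).
  exact: (proj2_sig (constructive_indefinite_description _ (Hex i))).
have : (size (map f (iota 0 N)) < size W)%N.
  apply: max_poly_roots => //.
    apply/allP => r /mapP [i]; rewrite mem_iota add0n => /andP[_ hi] ->.
    have := Hf i hi y0; rewrite HP -/u -/v => /DR_W.
    by rewrite /root -/W => ->.
  rewrite map_inj_in_uniq ?iota_uniq // => i j.
  rewrite !mem_iota !add0n => /andP[_ hi] /andP[_ hj] eij.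
  apply: NNPP => nij.
  have [y ny] := Hnd (f i); move: ny; rewrite Hy HP.
  apply/negP/negPn; apply: (@DR_two _ _ (i.+1%:R) (j.+1%:R)).
  - by apply/negP => /eqP /natr_inj_ch [e]; apply: nij.
  - by rewrite -HP; apply: Hf.
  - by rewrite -HP eij; apply: Hf.
by rewrite size_map size_iota ltnn.
Qed.

End Aux.
Arguments DR {F}.
Arguments upd {F}.

Section Mat.
Variable F : closedFieldType.
Hypothesis ch : [pchar F] =i pred0.

Lemma nonuniq_DR (s : seq F) : ~~ uniq s -> exists w, DR (\prod_(x <- s) ('X - x%:P)) w.
Proof.
elim: s => //= z s IH; rewrite negb_and negbK big_cons => /orP[zs|/IH [w]].
  exists z; have rq : root (\prod_(x <- s) ('X - x%:P)) z by rewrite root_prod_XsubC.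
  by rewrite /DR derivM derivXsubC mul1r !hornerE subrr !mul0r addr0 (rootP rq) eqxx.
rewrite /DR => /andP[/eqP h1 /eqP h2]; exists w.
by rewrite derivM derivXsubC mul1r !hornerE h1 h2 !mulr0 addr0 eqxx.
Qed.

Definition Pch {n} (A : 'M[F]_n) (y : nat -> F) := char_poly (A *m diag_mx (\row_j y (nat_of_ord j))).

Lemma Pch_aff n (A : 'M[F]_n) (i0 : 'I_n) (y : nat -> F) : exists S, forall t,
  Pch A (upd y i0 t) = Pch A (upd y i0 0) - t *: S.
Proof.
set M0 := char_poly_mx (A *m diag_mx (\row_j upd y i0 0 (nat_of_ord j))).
exists (\sum_a (A a i0)%:P * cofactor M0 a i0) => t.
rewrite /Pch /char_poly !(expand_det_col _ i0) scaler_sumr -sumrB.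
apply: eq_bigr => a _.
set Mt := char_poly_mx _.
have hc : cofactor Mt a i0 = cofactor M0 a i0.
  rewrite /cofactor; congr (_ * \det (row' a _)).
  apply/matrixP => b c; rewrite /Mt /M0 !mul_mx_diag !mxE /upd.
  have -> : (nat_of_ord (lift i0 c) == nat_of_ord i0) = false.
    by apply/negbTE; rewrite val_eqE eq_sym neq_lift.
  done.
rewrite hc /Mt /M0 !mul_mx_diag !mxE /upd eqxx mulr0 polyC0 subr0 polyCM -mul_polyC.
ring.
Qed.

End Mat.
Arguments Pch {F n}.
Arguments Pch_aff {F n}.

Theorem proposition9 (F : closedFieldType) (n : nat)
  (charF0 : [pchar F] =i pred0) (n_gt0 : (0 < n)%N)
  (A : 'M[F]_n) (A_unit : A \in unitmx) :
  exists d : 'rV[F]_n,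
    (forall i, d 0 i != 0) /\
    exists e : 'I_n -> F,
      injective e /\ forall i, eigenvalue (A *m diag_mx d) (e i).
Proof.
have Hsz y : size (Pch A y) = n.+1 /\ (Pch A y)`_n = 1.
  split; first exact: size_char_poly.
  by have /monicP := char_poly_monic (A *m diag_mx (\row_j y (nat_of_ord j)));
    rewrite lead_coefE size_char_poly.
have Hdep y z : (forall i, (i < n)%N -> y i = z i) -> Pch A y = Pch A z.
  move=> h; rewrite /Pch; congr (char_poly (A *m diag_mx _)).
  by apply/rowP => j; rewrite !mxE h.
have Haff y i t : (i < n)%N ->
    Pch A (upd y i t) = Pch A (upd y i 0) + t *: (Pch A (upd y i 1) - Pch A (upd y i 0)).
  move=> hi; have [S HS] := Pch_aff A (Ordinal hi) y.
  rewrite /= in HS; rewrite (HS t) (HS 1) scale1r.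
  by rewrite addrAC subrr sub0r scalerN.

have Hnd r : exists y, ~~ DR (Pch A y) r.
  case: (eqVneq r 0) => [->|rn0].
    exists (fun _ => 1); rewrite /DR negb_and; apply/orP; left.
    rewrite horner_coef0 /Pch char_poly_det det_mulmx det_diag.
    rewrite big1 ?mulr1; last by move=> j _; rewrite mxE.
    rewrite mulf_neq0 ?signr_eq0 //.
    by rewrite unitmxE unitfE in A_unit.
  exists (fun _ => 0); rewrite /DR negb_and; apply/orP; left.
  have -> : Pch A (fun _ => 0) = 'X^n.
    rewrite /Pch /char_poly /char_poly_mx.
    have -> : A *m diag_mx (\row_j (fun _ : nat => (0 : F)) (nat_of_ord j)) = 0.
      by apply/matrixP => a b; rewrite mul_mx_diag !mxE mulr0.
    rewrite map_mx0.
    by rewrite subr0 det_scalar.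
  by rewrite hornerXn expf_neq0.
have [y [Hy1 Hy2]] := @key F charF0 n n_gt0 n (Pch A) Hsz Hdep Haff Hnd.
exists (\row_j y (nat_of_ord j)); split; first by move=> i; rewrite mxE Hy1.
set p := Pch A y.
have [rs Hrs] := closed_field_poly_normal p.
have lc1 : lead_coef p = 1 by apply/monicP; exact: char_poly_monic.
rewrite lc1 scale1r in Hrs.
have szrs : size rs = n.
  by have := size_char_poly (A *m diag_mx (\row_j y (nat_of_ord j)));
     rewrite -/(Pch A y) -/p Hrs size_prod_XsubC => -[].
have urs : uniq rs.
  apply/negPn/negP => /nonuniq_DR [w]; rewrite -Hrs.
  by apply/negP; apply: Hy2.
exists (fun i : 'I_n => nth 0 rs i); split.
  move=> i j /eqP; rewrite nth_uniq ?szrs // => /eqP; exact: val_inj.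
move=> i; rewrite eigenvalue_root_char.
have -> : char_poly (A *m diag_mx (\row_j y (nat_of_ord j))) = p by [].
by rewrite Hrs root_prod_XsubC mem_nth ?szrs.
Qed.
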